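(* Let $n\ge 1$, let $X$ be uniformly distributed on $\{0,1\}^n$, and let $Y$ be the output of passing each component of $X$ independently through a binary symmetric channel with crossover probability $\alpha$ (i.e., $Y=X\oplus Z$ with $Z$ having i.i.d. Bernoulli($\alpha$) components independent of $X$). For any balanced Boolean function $f:\{0,1\}^n\to\{0,1\}$ (i.e., $\Pr(f(X)=0)=\tfrac12$) and any $\alpha$ with $\tfrac{1}{2}\left(1-\tfrac{1}{\sqrt{3}}\right)\le\alpha\le\tfrac{1}{2}$, we have \[ I(f(X);Y)\le \frac{\log(e)}{2}(1-2\alpha)^{2}+9\left(1-\frac{\log(e)}{2}\right)(1-2\alpha)^{4}. \]
   Context: $I(\cdot;\cdot)$ denotes mutual information; all logarithms are to base $2$. *)

(* Defs.v *)
From HB Require Import structures.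
From mathcomp Require Import all_boot all_order all_algebra.
From mathcomp Require Import all_classical all_reals all_analysis.
Set Implicit Arguments. Unset Strict Implicit. Unset Printing Implicit Defensive.
Import Order.TTheory GRing.Theory Num.Theory.
Local Open Scope ring_scope.

Definition log2 {R : realType} (x : R) : R := ln x / ln 2.

Definition mutual_info {R : realType} {A B : finType} (p : A -> B -> R) : R :=
  let pA := fun a => \sum_(b : B) p a b in
  let pB := fun b => \sum_(a : A) p a b in
  \sum_(a : A) \sum_(b : B)
     (if p a b == 0 then 0 else p a b * log2 (p a b / (pA a * pB b))).

Definition bsc {R : realType} (n : nat) (alpha : R) (x y : n.-tuple bool) : R :=
  \prod_(i < n) (if tnth x i == tnth y i then 1 - alpha else alpha).

Definition unifX {R : realType} (n : nat) (x : n.-tuple bool) : R := (2 ^+ n)^-1.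

Definition joint_fX_Y {R : realType} (n : nat) (alpha : R)
    (f : n.-tuple bool -> bool) (b : bool) (y : n.-tuple bool) : R :=
  \sum_(x : n.-tuple bool | f x == b) unifX x * bsc alpha x y.

Definition balanced (R : realType) (n : nat) (f : n.-tuple bool -> bool) : Prop :=
  \sum_(x : n.-tuple bool | f x == false) (unifX x : R) = 2^-1.

(* Main.v *)
Require Import Defs.
From HB Require Import structures.
From mathcomp Require Import all_boot all_order all_algebra.
From mathcomp Require Import all_classical all_reals all_analysis.
From mathcomp Require Import ring lra.
Import Order.TTheory GRing.Theory Num.Theory.
Local Open Scope ring_scope.

Module Aux.
Set Implicit Arguments. Unset Strict Implicit. Unset Printing Implicit Defensive.
Section Four.
Variable R : realType.

Lemma sum_tuple0 (F : 0.-tuple bool -> R) : \sum_y F y = F [tuple].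
Proof. by rewrite (big_pred1 [tuple]) // => t /=; rewrite [t]tuple0; exact/esym/eqP. Qed.

Lemma sum_tupleS n (F : n.+1.-tuple bool -> R) :
  \sum_y F y = \sum_(y : n.-tuple bool) (F [tuple of true :: y] + F [tuple of false :: y]).
Proof.
rewrite (reindex (fun p : bool * n.-tuple bool => [tuple of p.1 :: p.2])) /=; last first.
  exists (fun t => (thead t, behead_tuple t)) => [[b y] _ | t _] /=.
    by rewrite theadE; congr pair; apply: val_inj.
  by rewrite -tuple_eta.
rewrite -(pair_big xpredT xpredT (fun (b : bool) (y : n.-tuple bool) => F [tuple of b :: y])) /= big_bool /=.
by rewrite big_split.
Qed.

Definition kk (r : R) (b c : bool) : R := if b == c then (1 + r) / 2 else (1 - r) / 2.

Definition K n (r : R) (x y : n.-tuple bool) : R := \prod_(i < n) kk r (tnth x i) (tnth y i).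

Lemma K0 r (x y : 0.-tuple bool) : K r x y = 1.
Proof. by rewrite /K big_ord0. Qed.

Lemma KS n r b c (x y : n.-tuple bool) :
  K r [tuple of b :: x] [tuple of c :: y] = kk r b c * K r x y.
Proof. by rewrite /K big_ord_recl !tnth0; congr (_ * _); apply: eq_bigr => i _; rewrite !tnthS. Qed.

Lemma K_sym n r (x y : n.-tuple bool) : K r x y = K r y x.
Proof. by apply: eq_bigr => i _; rewrite /kk eq_sym. Qed.

Lemma K_ge0 n r (x y : n.-tuple bool) : -1 <= r <= 1 -> 0 <= K r x y.
Proof.
move=> /andP[h1 h2]; apply: prodr_ge0 => i _; rewrite /kk.
by case: ifP => _; apply: divr_ge0 => //; lra.
Qed.

Lemma sumK n r (y : n.-tuple bool) : \sum_x K r x y = 1.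
Proof.
elim: n y => [|n IH] y; first by rewrite sum_tuple0 K0.
rewrite [y]tuple_eta sum_tupleS.
under eq_bigr => x _ do rewrite !KS.

under eq_bigr => x _ do rewrite -mulrDl.
rewrite -mulr_sumr IH mulr1 /kk.
by case: (thead y) => /=; field.
Qed.

Definition Top n (r : R) (g : n.-tuple bool -> R) (y : n.-tuple bool) : R :=
  \sum_x K r x y * g x.

Definition ga n (g : n.+1.-tuple bool -> R) (x : n.-tuple bool) : R :=
  (g [tuple of true :: x] + g [tuple of false :: x]) / 2.
Definition gb n (g : n.+1.-tuple bool -> R) (x : n.-tuple bool) : R :=
  (g [tuple of true :: x] - g [tuple of false :: x]) / 2.

Lemma Tsplit n r (g : n.+1.-tuple bool -> R) c (y : n.-tuple bool) :
  Top r g [tuple of c :: y] = Top r (ga g) y + (if c then r else - r) * Top r (gb g) y.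
Proof.
rewrite /Top sum_tupleS mulr_sumr -big_split /=; apply: eq_bigr => x _.
rewrite !KS /ga /gb /kk; by case: c => /=; field.

Qed.


Lemma sumS_sq n (g : n.+1.-tuple bool -> R) :
  \sum_y g y ^+ 2 = \sum_x (2 * ga g x ^+ 2 + 2 * gb g x ^+ 2).
Proof. rewrite sum_tupleS; apply: eq_bigr => x _; rewrite /ga /gb; by field. Qed.

Lemma sumS_g n (g : n.+1.-tuple bool -> R) :
  \sum_y g y = \sum_x (2 * ga g x).
Proof. rewrite sum_tupleS; apply: eq_bigr => x _; rewrite /ga; by field. Qed.

Lemma sumS_T2 n r (g : n.+1.-tuple bool -> R) :
  \sum_y (Top r g y) ^+ 2 =
  \sum_x (2 * Top r (ga g) x ^+ 2 + (2 * r ^+ 2) * Top r (gb g) x ^+ 2).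
Proof. rewrite sum_tupleS; apply: eq_bigr => x _; rewrite !Tsplit /=; ring. Qed.

Lemma sumS_T4 n r (g : n.+1.-tuple bool -> R) :
  \sum_y (Top r g y) ^+ 4 =
  \sum_x (2 * Top r (ga g) x ^+ 4 + (12 * r ^+ 2) * (Top r (ga g) x ^+ 2 * Top r (gb g) x ^+ 2)
      + (2 * r ^+ 4) * Top r (gb g) x ^+ 4).
Proof. rewrite sum_tupleS; apply: eq_bigr => x _; rewrite !Tsplit /=; ring. Qed.

Lemma Top0 r (g : 0.-tuple bool -> R) y : Top r g y = g [tuple].
Proof. by rewrite /Top sum_tuple0 K0 mul1r. Qed.

Lemma L_contr n r (g : n.-tuple bool -> R) : r ^+ 2 <= 1 ->
  \sum_y (Top r g y) ^+ 2 <= \sum_y g y ^+ 2.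
Proof.
move=> hr; elim: n g => [|n IH] g.
  by rewrite !sum_tuple0 Top0.
rewrite sumS_T2 sumS_sq !big_split /= -!mulr_sumr.
have h1 := IH (ga g); have h2 := IH (gb g).
have h3 : 0 <= \sum_x Top r (gb g) x ^+ 2 by apply: sumr_ge0 => x _; apply: sqr_ge0.
nra.
Qed.

Lemma L_mean0 n r (g : n.-tuple bool -> R) : r ^+ 2 <= 1 -> \sum_y g y = 0 ->
  \sum_y (Top r g y) ^+ 2 <= r ^+ 2 * \sum_y g y ^+ 2.
Proof.
move=> hr; elim: n g => [|n IH] g.
  by rewrite !sum_tuple0 Top0 => ->; rewrite expr0n /= mulr0.
rewrite sumS_g -mulr_sumr => h; have h0 : \sum_x ga g x = 0 by lra.
rewrite sumS_T2 sumS_sq !big_split /= -!mulr_sumr.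
have h1 := IH (ga g) h0; have h2 := L_contr (gb g) hr.
nra.
Qed.

Lemma CS (I : finType) (u v : I -> R) :
  (\sum_i u i * v i) ^+ 2 <= (\sum_i u i ^+ 2) * (\sum_i v i ^+ 2).
Proof.
set a := \sum_i u i ^+ 2; set b := \sum_i v i ^+ 2; set c := \sum_i u i * v i.
have a0 : 0 <= a by apply: sumr_ge0 => i _; apply: sqr_ge0.
have b0 : 0 <= b by apply: sumr_ge0 => i _; apply: sqr_ge0.
case: (eqVneq a 0) => [az|anz].
  have u0 : forall i, u i = 0.
    move=> i; move/psumr_eq0P: az => h.
    by apply/eqP; rewrite -sqrf_eq0; apply/eqP; apply: h => // j _; apply: sqr_ge0.
  have -> : c = 0 by rewrite /c; apply: big1 => i _; rewrite u0 mul0r.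
  by rewrite az expr0n /= mul0r.
have : 0 <= \sum_i (c * u i - a * v i) ^+ 2 by apply: sumr_ge0 => i _; apply: sqr_ge0.
have -> : \sum_i (c * u i - a * v i) ^+ 2 =
   \sum_i ((c ^+ 2) * u i ^+ 2 + (- (2 * a * c)) * (u i * v i) + (a ^+ 2) * v i ^+ 2).
  by apply: eq_bigr => i _; ring.
rewrite !big_split /= -!mulr_sumr -/a -/b -/c => h.
have ap : 0 < a by rewrite lt_neqAle eq_sym anz.
nra.
Qed.

Lemma L_hyper n r s (g : n.-tuple bool -> R) : s ^+ 2 = 3 * r ^+ 2 ->
  (2 ^+ n) * \sum_y (Top r g y) ^+ 4 <= (\sum_y (Top s g y) ^+ 2) ^+ 2.
Proof.
move=> hs; elim: n g => [|n IH] g.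
  by rewrite !sum_tuple0 !Top0 expr0 mul1r -exprM.
rewrite sumS_T4 sumS_T2 !big_split /= -!mulr_sumr.
set A4 := \sum_x Top r (ga g) x ^+ 4; set B4 := \sum_x Top r (gb g) x ^+ 4.
set AB := \sum_x (Top r (ga g) x ^+ 2 * Top r (gb g) x ^+ 2).
set P := \sum_x Top s (ga g) x ^+ 2; set Q := \sum_x Top s (gb g) x ^+ 2.
have h1 : 2 ^+ n * A4 <= P ^+ 2 := IH (ga g).
have h2 : 2 ^+ n * B4 <= Q ^+ 2 := IH (gb g).
have P0 : 0 <= P by apply: sumr_ge0 => i _; apply: sqr_ge0.
have Q0 : 0 <= Q by apply: sumr_ge0 => i _; apply: sqr_ge0.
have N0 : 0 <= (2 : R) ^+ n by apply: exprn_ge0.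
have A40 : 0 <= A4 by apply: sumr_ge0 => i _; rewrite -[4%N]/(2 * 2)%N exprM; apply: sqr_ge0.
have B40 : 0 <= B4 by apply: sumr_ge0 => i _; rewrite -[4%N]/(2 * 2)%N exprM; apply: sqr_ge0.
have cs : AB ^+ 2 <= A4 * B4.
  have -> : A4 = \sum_x (Top r (ga g) x ^+ 2) ^+ 2 by apply: eq_bigr => x _; rewrite -exprM.
  have -> : B4 = \sum_x (Top r (gb g) x ^+ 2) ^+ 2 by apply: eq_bigr => x _; rewrite -exprM.
  exact: CS.
have hAB : 2 ^+ n * AB <= P * Q.
  have e : (2 ^+ n * AB) ^+ 2 <= (P * Q) ^+ 2.
    rewrite !exprMn.
    apply: (le_trans (y := (2 ^+ n * A4) * (2 ^+ n * B4))).
      have -> : (2 ^+ n * A4) * (2 ^+ n * B4) = ((2 : R) ^+ n) ^+ 2 * (A4 * B4) by ring.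
      by apply: ler_wpM2l => //; apply: exprn_ge0.
    by apply: ler_pM => //; apply: mulr_ge0.
  have PQ0 : 0 <= P * Q by apply: mulr_ge0.
  nra.
rewrite exprS hs.
have r20 : 0 <= r ^+ 2 by apply: sqr_ge0.
have r40 : 0 <= (r ^+ 2) ^+ 2 by apply: sqr_ge0.
have Q20 : 0 <= Q ^+ 2 by apply: sqr_ge0.
have -> : 2 * 2 ^+ n * (2 * A4 + 12 * r ^+ 2 * AB + 2 * r ^+ 4 * B4) = 4 * (2 ^+ n * A4) + (24 * r ^+ 2) * (2 ^+ n * AB) + (4 * (r ^+ 2) ^+ 2) * (2 ^+ n * B4) by ring.
have -> : (2 * P + 2 * (3 * r ^+ 2) * Q) ^+ 2 = 4 * P ^+ 2 + (24 * r ^+ 2) * (P * Q) + (4 * (r ^+ 2) ^+ 2) * (9 * Q ^+ 2) by ring.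
apply: lerD; first apply: lerD.
- by apply: ler_wpM2l.
- by apply: ler_wpM2l => //; apply: mulr_ge0.
- by apply: ler_wpM2l; [apply: mulr_ge0|lra].
Qed.

End Four.
Section Anal.
Variable R : realType.

Lemma incr (f df : R -> R) (a b : R) : a <= b ->
  (forall x, a <= x <= b -> is_derive x 1 f (df x)) ->
  (forall x, a <= x <= b -> 0 <= df x) -> f a <= f b.
Proof.
move=> ab hd hp.
have [c cab E] : exists2 c, c \in `[a, b]%R & f b - f a = df c * (b - a).
  apply: MVT_segment => //.
    move=> x; rewrite in_itv /= => /andP[h1 h2]; apply: hd.
    by rewrite !ltW.
  apply: derivable_within_continuous => x; rewrite in_itv /= => hx.
  by have := hd x hx => -[].
rewrite -subr_ge0 E mulr_ge0 ?subr_ge0 //; apply: hp.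
by move: cab; rewrite in_itv.
Qed.

Lemma dmul (f g : R -> R) (x df dg : R) : is_derive x 1 f df -> is_derive x 1 g dg ->
  is_derive x 1 (fun y => f y * g y) (f x * dg + g x * df).
Proof. move=> h1 h2; have := is_deriveM h1 h2. by []. Qed.

Lemma dadd (f g : R -> R) (x df dg : R) : is_derive x 1 f df -> is_derive x 1 g dg ->
  is_derive x 1 (fun y => f y + g y) (df + dg).
Proof. move=> h1 h2; have := is_deriveD h1 h2. by []. Qed.
Lemma dsub (f g : R -> R) (x df dg : R) : is_derive x 1 f df -> is_derive x 1 g dg ->
  is_derive x 1 (fun y => f y - g y) (df - dg).
Proof. move=> h1 h2; have := is_deriveB h1 h2. by []. Qed.
Lemma dneg (f : R -> R) (x df : R) : is_derive x 1 f df ->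
  is_derive x 1 (fun y => - f y) (- df).
Proof. move=> h1; have := is_deriveN h1. by []. Qed.
Lemma dcst (c x : R) : is_derive x 1 (fun _ : R => c) 0.
Proof. exact: is_derive_cst. Qed.
Lemma did (x : R) : is_derive x 1 (fun y : R => y) 1.
Proof. exact: is_derive_id. Qed.
Lemma dpoly (p : {poly R}) (x : R) : is_derive x 1 (fun y => p.[y]) (deriv p).[x].
Proof. exact: is_derive_poly. Qed.

Lemma dln1m (x : R) : x < 1 -> is_derive x 1 (fun y => ln (1 - y)) (- (1 - x)^-1).
Proof.
move=> x1.
have h1 : is_derive x 1 (fun y : R => 1 - y) (-1).
  have := dsub (dcst 1 x) (did x). rewrite sub0r. done.
have h2 : is_derive (1 - x) 1 (@ln R) (1 - x)^-1 by apply: is_derive1_ln; lra.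
have := is_derive1_comp (g := fun y => 1 - y) (x := x) h2 h1.
by rewrite mulrN1.
Qed.

Lemma dln1p (x : R) : -1 < x -> is_derive x 1 (fun y => ln (1 + y)) ((1 + x)^-1).
Proof.
move=> x1.
have h1 : is_derive x 1 (fun y : R => 1 + y) 1.
  have := dadd (dcst 1 x) (did x). rewrite add0r. done.
have h2 : is_derive (1 + x) 1 (@ln R) (1 + x)^-1 by apply: is_derive1_ln; lra.
have := is_derive1_comp (g := fun y => 1 + y) (x := x) h2 h1.
by rewrite mulr1.
Qed.

Lemma ln1m_le (t : R) : 0 <= t < 1 ->
  ln (1 - t) <= - (t + t ^+ 2 / 2 + t ^+ 3 / 3 + t ^+ 4 / 4).
Proof.
move=> /andP[t0 t1].
pose p : {poly R} := - ('X + (2^-1)%:P * 'X^2 + (3^-1)%:P * 'X^3 + (4^-1)%:P * 'X^4).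
have key : p.[0] - ln (1 - 0) <= p.[t] - ln (1 - t).
  apply: (@incr (fun y => p.[y] - ln (1 - y)) (fun y => (deriv p).[y] + (1 - y)^-1) 0 t t0).
    move=> x /andP[x0 xt]; apply: is_derive_eq.
      apply: dsub (dpoly p x) (dln1m _); lra.
    by rewrite opprK.
  move=> x /andP[x0 xt].
  have x1 : 1 - x != 0 by rewrite subr_eq0; apply/eqP; lra.
  have -> : (deriv p).[x] + (1 - x)^-1 = x ^+ 4 / (1 - x).
    rewrite /p !poly.derivE !hornerE /=; field; exact: x1.
  apply: divr_ge0; first by rewrite -[4%N]/(2*2)%N exprM sqr_ge0.
  lra.
move: key; rewrite /p !hornerE subr0 ln1 /= => h.
have e : - (t + 2^-1 * t * t + 3^-1 * t * t * t + 4^-1 * t * t * t * t) =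
  - (t + t ^+ 2 / 2 + t ^+ 3 / 3 + t ^+ 4 / 4) by ring.
have e0 : - (2^-1 * 0 * 0 + 3^-1 * 0 * 0 * 0 + 4^-1 * 0 * 0 * 0 * 0) - 0 = 0 :> R by ring.
rewrite e e0 in h; lra.
Qed.

Lemma ln2_le : ln (2 : R) <= 3 / 4.
Proof.
have e : expR (8^-1 : R) ^+ 6 = expR (3 / 4).
  by rewrite -expRM_natr; congr expR; field.
have h1 : 1 + 8^-1 <= expR (8^-1 : R) by apply: expR_ge1Dx.
have h2 : (1 + 8^-1) ^+ 6 <= expR (8^-1 : R) ^+ 6.
  by apply: lerXn2r => //; rewrite ?nnegrE //; lra.
have h3 : (2 : R) <= (1 + 8^-1) ^+ 6 by rewrite !exprS expr0; lra.
have h4 : (2 : R) <= expR (3 / 4) by rewrite -e; exact: le_trans h3 h2.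
have h5 : ln (2 : R) <= ln (expR (3 / 4)) by rewrite ler_ln ?posrE ?expR_gt0.
by rewrite expRK in h5.
Qed.

Lemma ln2_ge : 2^-1 <= ln (2 : R).
Proof.
have h1 : 1 + - 2^-1 <= expR (- 2^-1 : R) by apply: expR_ge1Dx.
have h2 : expR (2^-1 : R) <= 2.
  have -> : expR (2^-1 : R) = (expR (- 2^-1))^-1 by rewrite -expRN opprK.
  rewrite -[X in _ <= X](invrK (2:R)) lef_pV2 ?posrE ?expR_gt0 //; lra.
have h5 : ln (expR (2^-1 : R)) <= ln 2 by rewrite ler_ln ?posrE ?expR_gt0.
by rewrite expRK in h5.
Qed.

Section LB.
Let bt : R := 2 * ln 2 - 13 / 12.
Let hp : {poly R} := 'X + (2^-1)%:P * 'X^2 - (6^-1)%:P * 'X^3 + bt%:P * 'X^4 - (4^-1)%:P * 'X^5.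
Let D (y : R) := hp.[y] - (1 + y) * ln (1 + y).
Let D1 (y : R) := (deriv hp).[y] - (ln (1 + y) + 1).
Let q (y : R) := (12 * bt - 1) + (12 * bt - 5) * y - 5 * y ^+ 2.

Lemma dD (x : R) : 0 <= x -> is_derive x 1 D (D1 x).
Proof.
move=> x0; apply: is_derive_eq.
  apply: dsub (dpoly hp x) (dmul (dadd (dcst 1 x) (did x)) (dln1p _)); lra.
rewrite /D1 mulfV; last by apply/eqP; lra.
by rewrite add0r mulr1 (addrC 1).
Qed.

Lemma D2E (x : R) : 0 <= x -> (deriv (deriv hp)).[x] - (1 + x)^-1 = x ^+ 2 * q x / (1 + x).
Proof.
move=> x0; rewrite /hp /q !poly.derivE !hornerE /=; field; apply/eqP; lra.
Qed.

Lemma dD1 (x : R) : 0 <= x -> is_derive x 1 D1 (x ^+ 2 * q x / (1 + x)).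
Proof.
move=> x0; apply: is_derive_eq.
  apply: dsub (dpoly (deriv hp) x) (dadd (dln1p _) (dcst 1 x)); lra.
by rewrite addr0 D2E.
Qed.

Lemma q_decr (s u : R) : ln (2:R) <= 3 / 4 -> 0 <= s -> s <= u -> q u <= q s.
Proof. rewrite /q /bt => h s0 su; nra. Qed.

Lemma claim1 (s u : R) : 0 <= s -> s <= u -> q s <= 0 -> D1 u <= D1 s.
Proof.
move=> s0 su qs.
rewrite -lerN2.
apply: (@incr (fun y => - D1 y) (fun y => - (y ^+ 2 * q y / (1 + y))) s u su).
  by move=> x /andP[sx xu]; apply: dneg; apply: dD1; exact: le_trans s0 sx.
move=> x /andP[sx xu]; rewrite oppr_ge0.
have := q_decr ln2_le s0 sx => hq.
apply: mulr_le0_ge0; last by rewrite invr_ge0; lra.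
apply: mulr_ge0_le0; [exact: sqr_ge0 | lra].
Qed.

Lemma claim2 (s : R) : 0 <= s -> 0 <= q s -> D1 0 <= D1 s.
Proof.
move=> s0 qs.
apply: (@incr D1 (fun y => y ^+ 2 * q y / (1 + y)) 0 s s0).
  by move=> x /andP[x0 _]; apply: dD1.
move=> x /andP[x0 xs].
have := q_decr ln2_le x0 xs => hq.
apply: mulr_ge0; last by rewrite invr_ge0; lra.
apply: mulr_ge0; [exact: sqr_ge0 | lra].
Qed.

Lemma D1_0 : D1 0 = 0.
Proof. rewrite /D1 /hp !poly.derivE !hornerE /= ?addr0 ln1; ring. Qed.
Lemma D_0 : D 0 = 0.
Proof. rewrite /D /hp !hornerE /= ?addr0 ln1; ring. Qed.
Lemma D_1 : D 1 = 0.
Proof. rewrite /D /hp /bt !hornerE /= (_ : (1 + 1 : R) = 2) //; by field. Qed.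

Lemma D_ge0 (t : R) : 0 <= t <= 1 -> 0 <= D t.
Proof.
move=> /andP[t0 t1].
case: (pselect (forall s, 0 <= s <= t -> 0 <= D1 s)) => [hall|hn].
  rewrite -D_0; apply: (@incr D D1 0 t t0) => //.
  by move=> x /andP[x0 _]; apply: dD.
have [s hs] : exists s, ~ (0 <= s <= t -> 0 <= D1 s) by apply/existsNP.
have [s0t neg] : 0 <= s <= t /\ D1 s < 0.
  split; first by apply: contrapT => h; apply: hs => h'; exfalso; exact: h.
  by rewrite ltNge; apply/negP => h; apply: hs.
move/andP: s0t => [s0 st].
have qs : q s <= 0.
  rewrite leNgt; apply/negP => qs.
  have := claim2 s0 (ltW qs); rewrite D1_0; lra.
rewrite -D_1; rewrite -lerN2.
apply: (@incr (fun y => - D y) (fun y => - D1 y) t 1 t1).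
  by move=> x /andP[tx _]; apply: dneg; apply: dD; exact: le_trans t0 tx.
move=> x /andP[tx _]; rewrite oppr_ge0.
have := claim1 s0 (le_trans st tx) qs; lra.
Qed.

Lemma lnp_bound (t : R) : 0 <= t <= 1 -> (1 + t) * ln (1 + t) <=
  t + t ^+ 2 / 2 - t ^+ 3 / 6 + (2 * ln 2 - 13 / 12) * t ^+ 4 - t ^+ 5 / 4.
Proof.
move=> h; have := D_ge0 h; rewrite /D /hp /bt !hornerE /= => h1.
have e : t + 2^-1 * t * t - 6^-1 * t * t * t + (2 * ln 2 - 13 / 12) * t * t * t * t - 4^-1 * t * t * t * t * t
  = t + t ^+ 2 / 2 - t ^+ 3 / 6 + (2 * ln 2 - 13 / 12) * t ^+ 4 - t ^+ 5 / 4 by ring.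
rewrite e in h1; lra.
Qed.
End LB.

Lemma phi_pos (t : R) : 0 <= t <= 1 ->
  ((1 + t) * ln (1 + t) + (1 - t) * ln (1 - t)) / 2 <= t ^+ 2 / 2 + (ln 2 - 2^-1) * t ^+ 4.
Proof.
move=> /andP[t0 t1].
have h1 := lnp_bound (t := t) (introT andP (conj t0 t1)).
have h2 : (1 - t) * ln (1 - t) <= - ((1 - t) * (t + t ^+ 2 / 2 + t ^+ 3 / 3 + t ^+ 4 / 4)).
  case: (eqVneq t 1) => [->|tn1]; first by rewrite subrr !mul0r oppr0.
  rewrite -mulrN; apply: ler_wpM2l; first lra.
  apply: ln1m_le; rewrite t0 /= lt_neqAle tn1; exact: t1.
set a := (1 + t) * ln (1 + t) in h1 *; set b := (1 - t) * ln (1 - t) in h2 *.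
have e : t + t ^+ 2 / 2 - t ^+ 3 / 6 + (2 * ln 2 - 13 / 12) * t ^+ 4 - t ^+ 5 / 4
   - ((1 - t) * (t + t ^+ 2 / 2 + t ^+ 3 / 3 + t ^+ 4 / 4)) = 2 * (t ^+ 2 / 2 + (ln 2 - 2^-1) * t ^+ 4).
  by field.
lra.
Qed.

Lemma phi_bound (t : R) : -1 <= t <= 1 ->
  ((1 + t) * ln (1 + t) + (1 - t) * ln (1 - t)) / 2 <= t ^+ 2 / 2 + (ln 2 - 2^-1) * t ^+ 4.
Proof.
move=> /andP[t0 t1].
have e4 : forall u : R, (- u) ^+ 4 = u ^+ 4.
  by move=> u; rewrite -[4%N]/(2 * 2)%N !exprM sqrrN.
case: (leP 0 t) => ht; first by apply: phi_pos; rewrite ht t1.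
have := phi_pos (t := - t); rewrite sqrrN e4 opprK addrC.
apply; apply/andP; split; lra.
Qed.
End Anal.
Section M.
Variable R : realType.
Lemma sum_const_tuple n (c : R) : \sum_(x : n.-tuple bool) c = 2 ^+ n * c.
Proof. by rewrite sumr_const card_tuple card_bool -(mulr_natr c (2 ^ n)) natrX mulrC. Qed.
Lemma sum_split_f n (f : n.-tuple bool -> bool) (G : n.-tuple bool -> R) :
  \sum_x G x = \sum_(x | f x == true) G x + \sum_(x | f x == false) G x.
Proof. rewrite (bigID (fun x => f x)) /=; congr (_ + _); apply: eq_bigl => x; by case: (f x). Qed.
End M.

End Aux.
Import Aux.

Theorem theorem1 (R : realType) (n : nat) (f : n.-tuple bool -> bool) (alpha : R) :
  (1 <= n)%N ->
  @balanced R n f ->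
  2^-1 * (1 - (Num.sqrt 3)^-1) <= alpha -> alpha <= 2^-1 ->
  mutual_info (joint_fX_Y alpha f) <=
    log2 (expR 1) / 2 * (1 - 2 * alpha) ^+ 2
    + 9 * (1 - log2 (expR 1) / 2) * (1 - 2 * alpha) ^+ 4.
Proof.
move=> _ bal ha1 ha2.
have eq_le_R : forall a b : R, a = b -> a <= b by move=> a b ->.
rewrite /balanced /unifX in bal.
set r := 1 - 2 * alpha.
set u : R := (2 ^+ n)^-1.
have N0 : (0:R) < 2 ^+ n by apply: exprn_gt0.
have uN : u * 2 ^+ n = 1 by rewrite /u mulVf ?gt_eqF.
have u0 : 0 < u by rewrite /u invr_gt0.
have r0 : 0 <= r by rewrite /r; lra.
have s3 : 0 < Num.sqrt (3:R) by rewrite sqrtr_gt0; lra.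
have rs : Num.sqrt 3 * r <= 1.
  have h : r <= (Num.sqrt 3)^-1 by rewrite /r; lra.
  apply: (le_trans (y := Num.sqrt 3 * (Num.sqrt 3)^-1)).
    by apply: ler_wpM2l => //; exact: ltW.
  by rewrite mulfV // lt0r_neq0.
set s := Num.sqrt 3 * r.
have s2 : s ^+ 2 = 3 * r ^+ 2 by rewrite /s exprMn sqr_sqrtr //; lra.
have s0 : 0 <= s by rewrite /s mulr_ge0 // ltW.
have s21 : s ^+ 2 <= 1 by rewrite expr2 -[1](mulr1 1); apply: ler_pM.
have r21 : r ^+ 2 <= 1 by move: s21; rewrite s2; lra.
have rb : -1 <= r <= 1 by apply/andP; split; move: r21; rewrite expr2; nra.
have bscK : forall x y : n.-tuple bool, bsc alpha x y = K r x y.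
  move=> x y; rewrite /bsc /K; apply: eq_bigr => i _; rewrite /kk /r.
  by case: ifP => _; field.
pose q b y := \sum_(x | f x == b) K r x y.
have jq : forall b y, joint_fX_Y alpha f b y = u * q b y.
  move=> b y; rewrite /joint_fX_Y /q mulr_sumr; apply: eq_bigr => x _.
  by rewrite bscK.
have qs : forall y, q true y + q false y = 1.
  by move=> y; rewrite /q -sum_split_f sumK.
have q0 : forall b y, 0 <= q b y.
  by move=> b y; apply: sumr_ge0 => x _; apply: K_ge0.
have pB : forall y, \sum_a joint_fX_Y alpha f a y = u.
  by move=> y; rewrite big_bool /= !jq -mulrDr qs mulr1.
have sumu : \sum_(x : n.-tuple bool) u = 1 by rewrite sum_const_tuple mulrC.
have pA : forall b, \sum_y joint_fX_Y alpha f b y = 2^-1.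
  have e : forall b, \sum_y joint_fX_Y alpha f b y = \sum_(x | f x == b) u.
    move=> b; under eq_bigr do rewrite jq.
    rewrite -mulr_sumr /q exchange_big /= mulr_sumr; apply: eq_bigr => x _.
    under eq_bigr do rewrite K_sym.
    by rewrite sumK mulr1.
  move=> b; rewrite e; case: b => //.
  move: sumu; rewrite (sum_split_f f) bal; lra.
rewrite /mutual_info /=.
under eq_bigr => a _ do under eq_bigr => y _ do rewrite pA pB jq.
have tm : forall x : R, (if u * x == 0 then 0 else u * x * log2 (u * x / (2^-1 * u)))
    = u / ln 2 * (x * ln (2 * x)).
  move=> x; case: ifP => [/eqP h|_].
    have -> : x = 0 by move/eqP: h; rewrite mulf_eq0 (gt_eqF u0) /= => /eqP.
    by rewrite !mul0r mulr0.
  have -> : u * x / (2^-1 * u) = 2 * x by field; rewrite gt_eqF.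
  by rewrite /log2; ring.
under eq_bigr => a _ do under eq_bigr => y _ do rewrite tm.
rewrite exchange_big /=.
under eq_bigr => y _ do rewrite big_bool /= -mulrDr.
rewrite -mulr_sumr.
pose F := fun x : n.-tuple bool => if f x then -1 else 1 : R.
have TF : forall y, Top r F y = q false y - q true y.
  move=> y; rewrite /Top (sum_split_f f) /q addrC; congr (_ + _).
    by apply: eq_bigr => x /eqP hx; rewrite /F hx mulr1.
  by rewrite -sumrN; apply: eq_bigr => x /eqP hx; rewrite /F hx mulrN1.
have ph : forall y, q true y * ln (2 * q true y) + q false y * ln (2 * q false y) =
    ((1 + Top r F y) * ln (1 + Top r F y) + (1 - Top r F y) * ln (1 - Top r F y)) / 2.
  move=> y; rewrite TF.
  have e1 : 1 + (q false y - q true y) = 2 * q false y by have := qs y; lra.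
  have e2 : 1 - (q false y - q true y) = 2 * q true y by have := qs y; lra.
  by rewrite e1 e2; field.
under eq_bigr => y _ do rewrite ph.
have tb : forall y, -1 <= Top r F y <= 1.
  move=> y; rewrite TF; have := qs y; have := q0 true y; have := q0 false y.
  by move=> h1 h2 h3; apply/andP; split; lra.
have F0 : \sum_x F x = 0.
  rewrite (sum_split_f f).
  have -> : \sum_(x | f x == true) F x = - \sum_(x | f x == true) (1 : R).
    by rewrite -sumrN; apply: eq_bigr => x /eqP hx; rewrite /F hx.
  have -> : \sum_(x | f x == false) F x = \sum_(x | f x == false) (1 : R).
    by apply: eq_bigr => x /eqP hx; rewrite /F hx.
  have hA := sum_const_tuple n (1 : R); rewrite (sum_split_f f) mulr1 in hA.
  have hB : u * \sum_(x | f x == false) (1 : R) = 2^-1 by rewrite mulr_sumr mulr1.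
  have hB' : \sum_(x | f x == false) (1 : R) = 2 ^+ n * 2^-1.
    by rewrite -hB mulrA (mulrC _ u) uN mul1r.
  lra.
have F2 : \sum_x F x ^+ 2 = 2 ^+ n.
  rewrite -[RHS]mulr1 -sum_const_tuple; apply: eq_bigr => x _; rewrite /F.
  by case: (f x); rewrite ?sqrrN expr1n.
have L2b : \sum_y Top r F y ^+ 2 <= r ^+ 2 * 2 ^+ n.
  by have := L_mean0 (g := F) r21 F0; rewrite F2.
have L4b : \sum_y Top r F y ^+ 4 <= 9 * r ^+ 4 * 2 ^+ n.
  have h1 := @L_hyper R n r s F s2.
  have h2 := L_mean0 (g := F) s21 F0; rewrite F2 s2 in h2.
  have h20 : 0 <= \sum_y Top s F y ^+ 2 by apply: sumr_ge0 => y _; apply: sqr_ge0.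
  have h3 : (\sum_y Top s F y ^+ 2) ^+ 2 <= (3 * r ^+ 2 * 2 ^+ n) ^+ 2.
    apply: lerXn2r; rewrite ?nnegrE //; apply: mulr_ge0; [apply: mulr_ge0 => //; apply: sqr_ge0 | exact: ltW].
  rewrite -(ler_pM2l N0).
  apply: (le_trans h1); apply: (le_trans h3); apply: eq_le_R; ring.
have c0 : 0 <= ln (2 : R) - 2^-1 by have := ln2_ge R; lra.
have l2 : 0 < ln (2 : R) by have := ln2_ge R; lra.
apply: (le_trans (y := u / ln 2 * \sum_y (Top r F y ^+ 2 / 2 + (ln 2 - 2^-1) * Top r F y ^+ 4))).
  apply: ler_wpM2l; first by apply: divr_ge0; [exact: ltW | exact: ltW].
  by apply: ler_sum => y _; apply: phi_bound.
rewrite big_split /= -mulr_suml -mulr_sumr.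
apply: (le_trans (y := u / ln 2 * (r ^+ 2 * 2 ^+ n / 2 + (ln 2 - 2^-1) * (9 * r ^+ 4 * 2 ^+ n)))).
  apply: ler_wpM2l; first by apply: divr_ge0; [exact: ltW | exact: ltW].
  apply: lerD; first lra.
  exact: ler_wpM2l.
apply: eq_le_R; rewrite /log2 expRK /u; field.
by rewrite !gt_eqF.
Qed.
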